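(* Let $\mathbb{K}$ be a field containing a primitive $n$-th root of unity $\zeta_n$, let $g\ge1$, and let $(A_1,B_1,\dots,A_g,B_g)\in\operatorname{Sl}_n(\mathbb{K})^{2g}$ satisfy $[A_1,B_1]\cdots[A_g,B_g]=\zeta_n I$, where $[A,B]=ABA^{-1}B^{-1}$. If $Z\in\mathbb{K}^{n\times n}$ commutes with all the $A_i$ and $B_i$, then $Z$ is a scalar multiple of the identity. *)

(* Defs.v *)
From HB Require Import structures.
From mathcomp Require Import all_boot all_order all_algebra.
Set Implicit Arguments. Unset Strict Implicit. Unset Printing Implicit Defensive.
Import GRing.Theory.
Local Open Scope ring_scope.

Definition mxcomm (K : fieldType) (n : nat) (A B : 'M[K]_n) : 'M[K]_n :=
  A *m B *m invmx A *m invmx B.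

Definition comm_prod (K : fieldType) (n g : nat) (A B : 'I_g -> 'M[K]_n) : 'M[K]_n :=
  foldr (fun i acc => mxcomm (A i) (B i) *m acc) 1%:M (enum 'I_g).

(* Main.v *)
Require Import Defs.
From HB Require Import structures.
From mathcomp Require Import all_boot all_order all_algebra all_field.
From Stdlib Require Import Classical.
Import GRing.Theory.
Local Open Scope ring_scope.

Set Implicit Arguments. Unset Strict Implicit.
Section Core.
Variable F : fieldType.
Variable n : nat.
Variable Y : 'M[F]_n.

Definition Cm (M : 'M[F]_n) := Y *m M = M *m Y.

Let K0 := kermx Y.
Let r := \rank K0.
Let P := row_ebase K0.
Let E : 'M[F]_n := pid_mx r.
Let Q (M : 'M[F]_n) := P *m M *m invmx P.
Definition Ff M := E *m Q M *m E + copid_mx r.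

Lemma r_le : (r <= n)%N.
Proof. exact: rank_leq_col. Qed.

Lemma Pu : P \in unitmx.
Proof. exact: row_ebase_unit. Qed.

Lemma inv_of_comm M : Cm M -> E *m Q M *m copid_mx r = 0.
Proof.
move=> hC.
have h1 : (K0 *m M <= K0)%MS.
  by rewrite sub_kermx -mulmxA -hC mulmxA mulmx_ker mul0mx.
have h2 : (E *m P <= K0)%MS.
  rewrite /E -(@pid_mx_id F n r n r (leqnn r)) -mulmxA.
  apply: submx_trans (submxMl _ _) _.
  have -> : pid_mx r *m P = row_base K0 by [].
  by rewrite eq_row_base.
have h3 : (K0 <= E *m P)%MS.
  rewrite -(eq_row_base K0).
  have -> : row_base K0 = pid_mx r *m P by [].
  rewrite -(@pid_mx_id F r n n r r_le) -mulmxA.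
  exact: submxMl.
have h4 : (E *m P *m M <= E *m P)%MS.
  by apply: submx_trans h3; apply: submx_trans h1; apply: submxMr.
have [D hD] := submxP h4.
rewrite /Q !mulmxA hD !mulmxA -(mulmxA (D *m E) P) mulmxV ?Pu // mulmx1.
by rewrite -mulmxA mul_pid_mx_copid ?r_le // mulmx0.
Qed.

Lemma QM M N : Q (M *m N) = Q M *m Q N.
Proof. by rewrite /Q !mulmxA mulmxKV ?Pu. Qed.

Lemma Ff_mul M N : Cm M -> Ff (M *m N) = Ff M *m Ff N.
Proof.
move=> /inv_of_comm hI.
have hEM : E *m Q M *m E = E *m Q M.
  have : E *m Q M *m (E + copid_mx r) = E *m Q M.
    by rewrite /copid_mx addrC subrK mulmx1.
  by rewrite mulmxDr hI addr0.
have hEc : E *m copid_mx r = 0 by rewrite mul_pid_mx_copid ?r_le.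
have hcE : copid_mx r *m E = 0 by rewrite mul_copid_mx_pid ?r_le.
rewrite /Ff QM mulmxDl (mulmxDr (E *m Q M *m E)) (mulmxDr (copid_mx r)).
rewrite hEM hI addr0.
rewrite !mulmxA hcE !mul0mx add0r copid_mx_id ?r_le //.
congr (_ + _).
have hEM' : E *m P *m M *m invmx P *m E = E *m P *m M *m invmx P.
  by move: hEM; rewrite /Q !mulmxA.
rewrite hEM' -(mulmxA _ (invmx P) P) mulVmx ?Pu // mulmx1.
Qed.

Lemma Ff1 : Ff 1%:M = 1%:M.
Proof.
rewrite /Ff /Q mulmx1 mulmxV ?Pu // mulmx1 pid_mx_id ?r_le //.
by rewrite /copid_mx addrC subrK.
Qed.

Lemma Cm_mul M N : Cm M -> Cm N -> Cm (M *m N).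
Proof. by rewrite /Cm => hM hN; rewrite mulmxA hM -!mulmxA hN. Qed.

Lemma Cm_inv (M : 'M[F]_n) : M \in unitmx -> Cm M -> Cm (invmx M).
Proof.
rewrite /Cm => hu hM.
by rewrite -[RHS](mulmxK hu) -(mulmxA (invmx M)) hM mulKmx.
Qed.

Lemma Cm1 : Cm 1%:M.
Proof. by rewrite /Cm mulmx1 mul1mx. Qed.

Lemma det_Ff_inv M : M \in unitmx -> Cm M -> \det (Ff M) * \det (Ff (invmx M)) = 1.
Proof.
move=> hu hC; rewrite -det_mulmx -Ff_mul // mulmxV // Ff1 det1 //.
Qed.

Lemma det_Ff_comm A B : A \in unitmx -> B \in unitmx -> Cm A -> Cm B ->
  Cm (mxcomm A B) /\ \det (Ff (mxcomm A B)) = 1.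
Proof.
move=> uA uB cA cB.
have cA' := Cm_inv uA cA; have cB' := Cm_inv uB cB.
have cAB := Cm_mul cA cB.
have cABA := Cm_mul cAB cA'.
rewrite /mxcomm; split; first by apply: Cm_mul.
rewrite (Ff_mul _ cABA) (Ff_mul _ cAB) (Ff_mul _ cA) !det_mulmx.
have hA := det_Ff_inv uA cA; have hB := det_Ff_inv uB cB.
by rewrite -mulrA mulrACA hA hB mulr1.
Qed.

Lemma prod_if (z : F) m k : \prod_(i < m) (if (i < k)%N then z else 1) = z ^+ minn k m.
Proof.
elim: m => [|m IH]; first by rewrite big_ord0 minn0 expr0.
rewrite big_ord_recr /= IH.
case: (ltnP m k) => hmk.
  by rewrite (minn_idPr hmk) exprSr.
by rewrite mulr1 (minn_idPl (leqW hmk)).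
Qed.

Lemma Ff_scalar (z : F) : \det (Ff z%:M) = z ^+ r.
Proof.
have -> : Ff z%:M = diag_mx (\row_(i < n) (if (i < r)%N then z else 1)).
  apply/matrixP => i j.
  rewrite /Ff /Q mul_mx_scalar -scalemxAl mulmxV ?Pu // scalemx1.
  rewrite mul_mx_scalar -scalemxAl pid_mx_id ?r_le // /copid_mx !mxE.
  case: (eqVneq i j) => [<-|hij].
    by rewrite eqxx /=; case: (i < r)%N; rewrite /= ?mulr1 ?subrr ?addr0 ?mulr0 ?sub0r ?subr0 ?add0r.
  by move: hij; rewrite -val_eqE => /negPf ->; rewrite /= mulr0 subr0 addr0 mulr0n.
by rewrite det_diag (eq_bigr (fun i : 'I_n => if (i < r)%N then z else 1)) ?prod_if ?(minn_idPl r_le) // => i _; rewrite mxE.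
Qed.

End Core.

Lemma core_zero (F : fieldType) (n g : nat) (zeta : F)
  (hzeta : n.-primitive_root zeta)
  (A B : 'I_g -> 'M[F]_n)
  (hA : forall i, \det (A i) = 1) (hB : forall i, \det (B i) = 1)
  (hprod : comm_prod A B = zeta%:M)
  (Y : 'M[F]_n)
  (hYA : forall i, Y *m A i = A i *m Y) (hYB : forall i, Y *m B i = B i *m Y)
  (v : 'rV[F]_n) (hv : v != 0) (hvY : v *m Y = 0) : Y = 0.
Proof.
have uA i : A i \in unitmx by rewrite unitmxE hA unitr1.
have uB i : B i \in unitmx by rewrite unitmxE hB unitr1.
have key : forall s : seq 'I_g,
  Cm Y (foldr (fun i acc => mxcomm (A i) (B i) *m acc) 1%:M s) /\
  \det (Ff Y (foldr (fun i acc => mxcomm (A i) (B i) *m acc) 1%:M s)) = 1.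
  elim => [|i s [IHc IHd]] /=; first by rewrite Ff1 det1; split => //; apply: Cm1.
  have [hc hd] := det_Ff_comm (uA i) (uB i) (hYA i) (hYB i).
  split; first exact: Cm_mul.
  by rewrite Ff_mul // det_mulmx hd IHd mulr1.
have [_ hd] := key (enum 'I_g).
have hz : zeta ^+ \rank (kermx Y) = 1.
  by rewrite -Ff_scalar; move: hd; rewrite /comm_prod in hprod; rewrite hprod.
have hdvd : (n %| \rank (kermx Y))%N by rewrite (prim_order_dvd hzeta) hz eqxx.
have hpos : (0 < \rank (kermx Y))%N.
  have hsub : (v <= kermx Y)%MS by rewrite sub_kermx hvY eqxx.
  apply: leq_trans (mxrankS hsub).
  by rewrite lt0n mxrank_eq0.
have hle : (\rank (kermx Y) <= n)%N by apply: rank_leq_col.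
have heq : \rank (kermx Y) = n.
  apply/eqP; rewrite eqn_leq hle /=.
  exact: dvdn_leq hpos hdvd.
apply/eqP; rewrite -mxrank_eq0.
move: heq; rewrite mxrank_ker.
have := rank_leq_row Y.
move: (\rank Y) => k hk.
case: k hk => // k hk; move: (hk); rewrite -subn_gt0 => _.
move=> h; have : (n - k.+1 < n)%N by rewrite ltn_subrL /=; apply: leq_ltn_trans hk.
by rewrite h ltnn.
Qed.

Lemma irr_scale (K : fieldType) (q : {poly K}) (c : K) : c != 0 ->
  irreducible_poly q -> irreducible_poly (c *: q).
Proof.
move=> hc [hs hq]; split; first by rewrite size_scale.
move=> d hd; rewrite dvdpZr // => hdq.
apply: eqp_trans (hq _ hd hdq) _.
by rewrite eqp_sym eqp_scale.
Qed.

Lemma irr_factor (K : fieldType) (q : {poly K}) : (1 < size q)%N ->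
  exists h : {poly K}, monic_irreducible_poly h /\ h %| q.
Proof.
move: {2}(size q) (leqnn (size q)) => k; elim: k q => [|k IH] q hk hq.
  by have := leq_trans hq hk.
have q0 : q != 0 by rewrite -size_poly_gt0 (ltn_trans _ hq).
destruct (classic (irreducible_poly q)) as [hI|hN].
  have hl : lead_coef q != 0 by rewrite lead_coef_eq0.
  exists ((lead_coef q)^-1 *: q); split; last by rewrite dvdpZl ?invr_eq0 // dvdpp.
  split; first by apply: irr_scale; rewrite ?invr_eq0.
  by rewrite monicE lead_coefZ mulVf.
have : ~ (forall d : {poly K}, size d != 1%N -> d %| q -> d %= q).
  by move=> H; apply: hN; split.
move=> /not_all_ex_not [d Hd].
have [hd Hd2] := imply_to_and _ _ Hd.
have [hdq hne] := imply_to_and _ _ Hd2.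
have d0 : d != 0 by apply: contraTneq hdq => ->; rewrite dvd0p.
have hsd : (1 < size d)%N.
  by rewrite ltn_neqAle eq_sym hd size_poly_gt0.
have hlt : (size d < size q)%N.
  have hle := dvdp_leq q0 hdq.
  by rewrite ltn_neqAle hle andbT (dvdp_size_eqp hdq); apply/negP.
have hdk : (size d <= k)%N by rewrite -ltnS (leq_trans hlt hk).
have [h [hI hh]] := IH d hdk hsd.
by exists h; split => //; apply: dvdp_trans hh hdq.
Qed.

Lemma ext_eig (K : fieldType) n (Z : 'M[K]_n) : (0 < n)%N ->
  exists (L : fieldType) (f : {rmorphism K -> L}) (lam : L),
  exists2 v : 'rV[L]_n, v *m (map_mx f Z - lam%:M) = 0 & v != 0.
Proof.
move=> n0.
have hs : (1 < size (char_poly Z))%N by rewrite size_char_poly ltnS.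
have [h [hI hdvd]] := irr_factor hs.
pose L : fieldType := {poly %/ h with hI}.
pose f : {rmorphism K -> L} := qpolyC h.
exists L, f, (qpolyX h : L).
have hroot : root (map_poly f h) (qpolyX h : L).
  apply/eqP.
  have := in_qpoly_comp_horner h h 'X.
  rewrite comp_polyXr => <-.
  apply: val_inj => /=.
  by rewrite (mk_monicE hI) Pdiv.RingMonic.rmodpp //; exact: (snd hI).
have hroot2 : root (char_poly (map_mx f Z)) (qpolyX h : L).
  rewrite -map_char_poly.
  have [q hq] := dvdpP _ _ hdvd.
  by rewrite hq rmorphM /= rootM hroot orbT.
move: hroot2; rewrite -eigenvalue_root_char => /eigenvalueP [v hv v0].
exists v => //.
by rewrite mulmxBr hv mul_mx_scalar subrr.
Qed.

Unset Implicit Arguments.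
Set Strict Implicit.

Theorem proposition3p1 (K : fieldType) (n g : nat) (zeta : K)
  (hzeta : n.-primitive_root zeta) (hg : (1 <= g)%N)
  (A B : 'I_g -> 'M[K]_n)
  (hA : forall i, \det (A i) = 1) (hB : forall i, \det (B i) = 1)
  (hprod : comm_prod A B = zeta%:M)
  (Z : 'M[K]_n)
  (hZA : forall i, Z *m A i = A i *m Z) (hZB : forall i, Z *m B i = B i *m Z) :
  exists c : K, Z = c%:M.
Proof.
have [n0|npos] := posnP n.
  exists 0; apply/matrixP => i.
  by have := leq_trans (ltn_ord i) (eq_leq n0).
have [L [f [lam [v hv v0]]]] := ext_eig Z npos.
pose A' i := map_mx f (A i).
pose B' i := map_mx f (B i).
pose Y := map_mx f Z - lam%:M.
have hY : Y = 0.
  apply: (@core_zero L n g (f zeta) _ A' B' _ _ _ Y _ _ v v0 hv).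
  - by rewrite fmorph_primitive_root.
  - by move=> i; rewrite /A' det_map_mx hA rmorph1.
  - by move=> i; rewrite /B' det_map_mx hB rmorph1.
  - rewrite -map_scalar_mx -hprod /comm_prod.
    elim: (enum 'I_g) => [|i s IH] /=; first by rewrite map_scalar_mx rmorph1.
    by rewrite map_mxM IH /mxcomm !map_mxM !map_invmx.
  - move=> i; rewrite /Y /A' mulmxBl mulmxBr -!map_mxM hZA.
    by rewrite scalar_mxC.
  - move=> i; rewrite /Y /B' mulmxBl mulmxBr -!map_mxM hZB.
    by rewrite scalar_mxC.
have hZ : map_mx f Z = lam%:M by apply/eqP; rewrite -subr_eq0 -/Y hY.
pose i0 : 'I_n := Ordinal npos.
exists (Z i0 i0); apply/matrixP => i j.
have e := congr1 (fun M : 'M[L]_n => M i j) hZ; have e0 := congr1 (fun M : 'M[L]_n => M i0 i0) hZ.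
move: e e0; rewrite /= !mxE eqxx mulr1n => e e0.
case: (eqVneq i j) e => [<-|hij] e.
  by rewrite mulr1n; apply: (fmorph_inj f); rewrite e e0 ?eqxx ?mulr1n.
move: e; rewrite ?mulr0n => /eqP; rewrite fmorph_eq0 => /eqP ->.
by rewrite ?mulr0n.
Qed.
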